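(* For each natural number $n\ge 1$, $\mathrm{Log}_{<1}(\mathbb{R}^{n+1})\subsetneq \mathrm{Log}_{<1}(\mathbb{R}^n)$; that is, $\mathrm{Log}_{<1}(\mathbb{R}^n)$ strictly contains $\mathrm{Log}_{<1}(\mathbb{R}^{n+1})$.
   Context: Modal formulas are built from a countable set of propositional variables using $\bot$, $\to$ and one unary modality $\lozenge$. A frame is a pair $(X,R)$; a valuation assigns subsets of $X$ to variables; $x\models\lozenge\varphi$ iff there is $y$ with $xRy$ and $y\models\varphi$. A formula is valid in a frame if true at every point under every valuation. For a metric space $(X,d)$, $\mathrm{Log}_{<1}(X)$ is the set of modal formulas valid in the frame $(X,R_{<1})$, where $xR_{<1}y$ iff $d(x,y)<1$. $\mathbb{R}^n$ carries the Euclidean metric. *)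

(* Defs.v *)
From Stdlib Require Import Reals.
From mathcomp Require Import all_boot.

Set Implicit Arguments.

Inductive mformula : Type :=
  | MVar : nat -> mformula
  | MBot : mformula
  | MImp : mformula -> mformula -> mformula
  | MDia : mformula -> mformula.

Fixpoint msat (X : Type) (Rel : X -> X -> Prop) (V : nat -> X -> Prop)
  (x : X) (phi : mformula) : Prop :=
  match phi with
  | MVar p => V p x
  | MBot => False
  | MImp a b => msat Rel V x a -> msat Rel V x b
  | MDia a => exists y, Rel x y /\ msat Rel V y a
  end.

Definition valid_in_frame (X : Type) (Rel : X -> X -> Prop) (phi : mformula) : Prop :=
  forall (V : nat -> X -> Prop) (x : X), msat Rel V x phi.

Definition R_lt1 (X : Type) (d : X -> X -> R) : X -> X -> Prop :=
  fun x y => Rlt (d x y) R1.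

Definition Log_lt1 (X : Type) (d : X -> X -> R) : mformula -> Prop :=
  fun phi => valid_in_frame (R_lt1 d) phi.

Definition Rn (n : nat) : Type := 'I_n -> R.

Definition euclid_dist (n : nat) (x y : Rn n) : R :=
  sqrt (\big[Rplus/R0]_(i < n) (pow (Rminus (x i) (y i)) 2)).

Definition Log_lt1_Rn (n : nat) : mformula -> Prop := Log_lt1 (@euclid_dist n).

(* Main.v *)
Require Import Defs.
From Stdlib Require Import Reals Classical FunctionalExtensionality ClassicalEpsilon Arith Lia.
From mathcomp Require Import all_boot all_order all_algebra.
From mathcomp Require Import Rstruct.
From mathcomp Require Import ring lra zify.
Import Order.TTheory GRing.Theory Num.Theory.
Local Open Scope ring_scope.
Set Implicit Arguments.
Unset Strict Implicit.

Definition negF f := MImp f MBot.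
Definition andF a b := negF (MImp a (negF b)).
Definition topF := negF MBot.
Fixpoint dia k f := match k with O => f | S k => MDia (dia k f) end.
Definition box k f := negF (dia k (negF f)).
Fixpoint andN (G : nat -> mformula) m := match m with O => topF | S m => andF (andN G m) (G m) end.
Fixpoint reach (X : Type) (Rel : X -> X -> Prop) k (x z : X) : Prop :=
  match k with O => x = z | S k => exists w, Rel x w /\ reach Rel k w z end.

Section Sat.
Variables (X : Type) (Rel : X -> X -> Prop) (V : nat -> X -> Prop).

Lemma sat_and a b x : msat Rel V x (andF a b) <-> msat Rel V x a /\ msat Rel V x b.
Proof.
rewrite /=; split => [h | [ha hb] h]; last exact: h ha hb.
case: (classic (msat Rel V x a)) => ha; last by exfalso; apply: h => /ha.
case: (classic (msat Rel V x b)) => hb; last by exfalso; apply: h => _ /hb.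
by [].
Qed.

Lemma sat_top x : msat Rel V x topF.
Proof. by []. Qed.

Lemma sat_andN G m x : msat Rel V x (andN G m) <-> forall i, (i < m)%N -> msat Rel V x (G i).
Proof.
elim: m => [|m IH]; first by split => // _ i.
rewrite [andN G m.+1]/= sat_and IH; split.
  by move=> [h1 h2] i; rewrite ltnS leq_eqVlt => /orP [/eqP -> //| /h1].
by move=> h; split => [i hi|]; apply: h => //; apply: ltnW.
Qed.

Lemma sat_dia k f x : msat Rel V x (dia k f) <-> exists z, reach Rel k x z /\ msat Rel V z f.
Proof.
elim: k x => [|k IH] x /=; first by split => [h|[z [-> h]]] //; exists x.
split => [[w [hw /IH [z [hz hf]]]]|[z [[w [hw hz]] hf]]].
  by exists z; split => //; exists w.
by exists w; split => //; apply/IH; exists z.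
Qed.

Lemma sat_box k f x : msat Rel V x (box k f) <-> forall z, reach Rel k x z -> msat Rel V z f.
Proof.
rewrite /box -/(negF _) /=; split.
  move=> h z hz; case: (classic (msat Rel V z f)) => // hn; exfalso.
  by apply: h; apply/sat_dia; exists z.
by move=> h /sat_dia [z [hz hn]]; apply: hn; apply: h.
Qed.
End Sat.

Lemma pmorph_sat (X Y : Type) (RX : X -> X -> Prop) (RY : Y -> Y -> Prop) (f : X -> Y)
  (forth : forall x x', RX x x' -> RY (f x) (f x'))
  (back : forall x y, RY (f x) y -> exists x', RX x x' /\ f x' = y) V phi :
  forall x, msat RX (fun p a => V p (f a)) x phi <-> msat RY V (f x) phi.
Proof.
elim: phi => [p|| a IHa b IHb | a IHa] x /=; first by [].
- by [].
- by rewrite IHa IHb.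
- split => [[x' [hx ha]]|[y [hy ha]]].
    by exists (f x'); split; [apply: forth | apply/IHa].
  have [x' [hx' hxy]] := back _ _ hy.
  by exists x'; split => //; apply/IHa; rewrite hxy.
Qed.
Lemma sqrt_facts a : (Nat.sqrt a * Nat.sqrt a <= a < (Nat.sqrt a).+1 * (Nat.sqrt a).+1)%N.
Proof. have := Nat.sqrt_spec a (Nat.le_0_l a). lia. Qed.

Lemma lt_of_sq a b c : (a * a <= c)%N -> (c < b * b)%N -> (a < b)%N.
Proof. move=> h1 h2; rewrite ltnNge; apply/negP => h. have := leq_mul h h. lia. Qed.

Lemma TT_lt T X Y : (0 < T)%N -> (X < Y)%N -> (T * T * X < T * T * Y)%N.
Proof. by move=> hT hXY; rewrite ltn_pmul2l // muln_gt0 hT. Qed.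

Lemma params m (T := 6 * (m + 2)) :
  let A1 := T * T * (4 * m * m + 16 * m + 13) in
  let A0 := T * T * (m + 2) in
  let D1 := 2 * T * T * (2 * m+5) * (2 * m+5) in
  let D2 := T * T * (4 * m * m + 17 * m + 17) in
  (2 * ((Nat.sqrt A1).+1 * (Nat.sqrt A1).+1) <= Nat.sqrt D1 * Nat.sqrt D1 /\
  (Nat.sqrt A1).+1 * (Nat.sqrt A1).+1 + (Nat.sqrt A0).+1 * (Nat.sqrt A0).+1 <= Nat.sqrt D2 * Nat.sqrt D2)%N.
Proof.
move=> A1 A0 D1 D2.
have [h1 h1'] := andP (sqrt_facts A1).
have [h0 h0'] := andP (sqrt_facts A0).
have [g1 g1'] := andP (sqrt_facts D1).
have [g2 g2'] := andP (sqrt_facts D2).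
set s1 := Nat.sqrt A1 in h1 h1' *.
set s0 := Nat.sqrt A0 in h0 h0' *.
set k1 := Nat.sqrt D1 in g1 g1' *.
set k2 := Nat.sqrt D2 in g2 g2' *.
have hT : (12 <= T)%N by rewrite /T; lia.
have b1 : (s1 < 2 * (m+2) * T)%N.
  apply: (@lt_of_sq _ (2 * (m+2) * T) _ h1).
  have -> : (2 * (m + 2) * T * (2 * (m + 2) * T) = T * T * (4 * m * m + 16 * m + 16))%N by ring.
  by apply: TT_lt; lia.
have b0 : (s0 < (m+2) * T)%N.
  apply: (@lt_of_sq _ ((m+2) * T) _ h0).
  have -> : ((m + 2) * T * ((m + 2) * T) = T * T * ((m+2)*(m+2)))%N by ring.
  by apply: TT_lt; nia.
have c1 : (k1 < (3 * m+8) * T)%N.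
  apply: (@lt_of_sq _ ((3 * m+8) * T) _ g1).
  have -> : ((3 * m+8) * T * ((3 * m+8) * T) = T * T * ((3 * m+8)*(3 * m+8)))%N by ring.
  have -> : D1 = (T * T * (2 * (2 * m+5) * (2 * m+5)))%N by rewrite /D1; ring.
  by apply: TT_lt; nia.
have c2 : (k2 < (2 * m+5) * T)%N.
  apply: (@lt_of_sq _ ((2 * m+5) * T) _ g2).
  have -> : ((2 * m+5) * T * ((2 * m+5) * T) = T * T * ((2 * m+5)*(2 * m+5)))%N by ring.
  by apply: TT_lt; nia.
clearbody s1 s0 k1 k2.
split.
- have e : (D1 = 2 * A1 + T * T * (8 * m + 24))%N by rewrite /D1 /A1; ring.
  have f : (T * (14 * m + 32) + 2 <= T * T * (8 * m + 24))%N.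
    have : (14 * m + 33 <= T * (8 * m+24))%N by rewrite /T; nia.
    move=> h; have := leq_mul (leqnn T) h; lia.
  have ee : (s1.+1 * s1.+1 = s1 * s1 + 2 * s1 + 1)%N by ring.
  have ee' : (k1.+1 * k1.+1 = k1 * k1 + 2 * k1 + 1)%N by ring.
  clearbody A1 D1 T; lia.
- have e : (D2 = A1 + A0 + 2 * T * T)%N by rewrite /D2 /A1 /A0; ring.
  have f : (T * 6 * (m+2) + 2 + 2 * (2 * m+5) * T <= 2 * T * T)%N.
    have : (6 * (m+2) + 2 + 2 * (2 * m+5) <= 2 * T)%N by rewrite /T; lia.
    move=> h; have := leq_mul (leqnn T) h; lia.
  have ee : (s1.+1 * s1.+1 = s1 * s1 + 2 * s1 + 1)%N by ring.
  have ee0 : (s0.+1 * s0.+1 = s0 * s0 + 2 * s0 + 1)%N by ring.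
  have ee' : (k2.+1 * k2.+1 = k2 * k2 + 2 * k2 + 1)%N by ring.
  clearbody A1 A0 D2 T; lia.
Qed.

Definition sq n (x y : Rn n) : R := \sum_(i < n) (x i - y i) ^+ 2.
Definition dist n (x y : Rn n) : R := Num.sqrt (sq x y).

Lemma edE n (x y : Rn n) : euclid_dist x y = dist x y.
Proof.
rewrite /euclid_dist RsqrtE /dist /sq; congr Num.sqrt; apply: eq_bigr => i _.
by rewrite RpowE.
Qed.

Lemma relE n (x y : Rn n) : R_lt1 (@euclid_dist n) x y <-> dist x y < 1.
Proof. by rewrite /R_lt1 edE; split => /RltP. Qed.

Lemma sq_ge0 n (x y : Rn n) : 0 <= sq x y.
Proof. by apply: sumr_ge0 => i _; apply: sqr_ge0. Qed.

Lemma CS n (a b : 'I_n -> R) :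
  (\sum_i a i * b i) ^+ 2 <= (\sum_i a i ^+ 2) * (\sum_i b i ^+ 2).
Proof.
set A := \sum_i a i ^+ 2; set B := \sum_i a i * b i; set C := \sum_i b i ^+ 2.
have hA : 0 <= A by apply: sumr_ge0 => i _; apply: sqr_ge0.
have key : 0 <= A * (A * C - B ^+ 2).
  have -> : A * (A * C - B ^+ 2) = \sum_i (A * b i - B * a i) ^+ 2.
    transitivity (\sum_i (A ^+ 2 * b i ^+ 2 - (2 * A * B) * (a i * b i) + B ^+ 2 * a i ^+ 2)); last first.
      by apply: eq_bigr => i _; ring.
    rewrite big_split sumrB /= -!mulr_sumr -/A -/B -/C; ring.
  by apply: sumr_ge0 => i _; apply: sqr_ge0.
case: (eqVneq A 0) => hA0.
  have ha : forall i, a i = 0.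
    move=> i; have := @psumr_eq0P _ _ predT (fun i => a i ^+ 2) (fun i _ => sqr_ge0 (a i)) hA0 i isT.
    by move/eqP; rewrite sqrf_eq0 => /eqP.
  have hB : B = 0 by apply: big1 => i _; rewrite ha mul0r.
  by rewrite hB hA0 expr0n /= mul0r.
have hAp : 0 < A by rewrite lt_def hA0 hA.
move: key; rewrite pmulr_rge0 // => h; lra.
Qed.

Lemma sum_le_sqrt n (a b : 'I_n -> R) :
  \sum_i a i * b i <= Num.sqrt (\sum_i a i ^+ 2) * Num.sqrt (\sum_i b i ^+ 2).
Proof.
have hA : 0 <= \sum_i a i ^+ 2 by apply: sumr_ge0 => i _; apply: sqr_ge0.
apply: (le_trans (ler_norm _)); rewrite -sqrtr_sqr -sqrtrM //.
by rewrite ler_sqrt; [apply: CS | apply: mulr_ge0 => //; apply: sumr_ge0 => i _; apply: sqr_ge0].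
Qed.

Lemma dist_tri n (x y z : Rn n) : dist x z <= dist x y + dist y z.
Proof.
have e : sq x z = sq x y + 2 * \sum_i (x i - y i) * (y i - z i) + sq y z.
  by rewrite /sq mulr_sumr -!big_split; apply: eq_bigr => i _ /=; ring.
have h := sum_le_sqrt (fun i => x i - y i) (fun i => y i - z i).
have h2 : sq x z <= (dist x y + dist y z) ^+ 2.
  rewrite e sqrrD /dist !sqr_sqrtr ?sq_ge0 //.
  move: h; rewrite -/(sq x y) -/(sq y z) => h; lra.
have hp : 0 <= dist x y + dist y z by apply: addr_ge0; apply: sqrtr_ge0.
by rewrite /dist -(ger0_norm hp) -sqrtr_sqr ler_sqrt // sqr_ge0.
Qed.

Lemma dist_scale n (p q x z : Rn n) (c : R) :
  (forall i, p i - q i = c * (x i - z i)) -> dist p q = `|c| * dist x z.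
Proof.
move=> h; rewrite /dist.
have -> : sq p q = c ^+ 2 * sq x z.
  by rewrite /sq mulr_sumr; apply: eq_bigr => i _; rewrite h exprMn.
by rewrite sqrtrM ?sqr_ge0 // sqrtr_sqr.
Qed.

Lemma reach_lt n k (x z : Rn n) :
  reach (R_lt1 (@euclid_dist n)) k.+1 x z -> dist x z < k.+1%:R.
Proof.
elim: k x => [|k IH] x [w [hw hr]].
  by move: hw; rewrite /= in hr; rewrite hr => /relE.
have h1 := IH _ hr; move/relE: hw => h2.
have h3 := dist_tri x w z.
have e : (k.+2%:R : R) = k.+1%:R + 1 by rewrite -natr1.
lra.
Qed.

Lemma lt_reach n k (x z : Rn n) :
  (0 < k)%N -> dist x z < k%:R -> reach (R_lt1 (@euclid_dist n)) k x z.
Proof.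
elim: k x => [//|k IH] x _ h.
case: k IH h => [|k] IH h.
  by exists z; split => //; apply/relE.
set K : R := k.+2%:R.
have hK : 0 < K by rewrite /K ltr0n.
have hK0 : K != 0 by rewrite gt_eqF.
have hKi : 0 < K^-1 by rewrite invr_gt0.
have hKK : K^-1 * K = 1 by rewrite mulVf.
have hK2 : 2 <= K by rewrite /K ler_nat.
have hKi1 : K^-1 < 1.
  by rewrite invf_lt1 // /K ltr1n.
have e : (k.+1%:R : R) = K - 1 by rewrite /K -natr1; ring.
have hh : dist x z < K by [].
have hK0' : K != 0 by [].
clearbody K.
set w : Rn n := fun i => x i + (z i - x i) / K.
exists w; split.
  apply/relE; rewrite (@dist_scale _ x w x z K^-1); last by move=> i; rewrite /w; field.
  rewrite ger0_norm; last by apply: ltW.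
  have : K^-1 * dist x z < K^-1 * K by rewrite ltr_pM2l.
  by rewrite hKK.
apply: IH => //.
pose c := 1 - K^-1.
rewrite (@dist_scale _ w z x z c); last by move=> i; rewrite /w /c; field.
rewrite ger0_norm; last by rewrite /c; lra.
have : c * dist x z < c * K by rewrite ltr_pM2l // /c; lra.
rewrite e /c => h'; have hq : (1 - K^-1) * K = K - 1 by rewrite mulrBl hKK mul1r.
lra.
Qed.

Definition proj n (x : Rn n.+1) : Rn n := fun i => x (widen_ord (leqnSn n) i).
Definition ext n (z : Rn n) (t : R) : Rn n.+1 :=
  fun i => if unlift ord_max i is Some j then z j else t.

Lemma ext_widen n (z : Rn n) t i : ext z t (widen_ord (leqnSn n) i) = z i.
Proof.
have -> : widen_ord (leqnSn n) i = lift ord_max i by apply: val_inj; exact: (esym (lift_max i)).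
by rewrite /ext liftK.
Qed.

Lemma ext_max n (z : Rn n) t : ext z t ord_max = t.
Proof. by rewrite /ext unlift_none. Qed.

Lemma proj_ext n (z : Rn n) t : proj (ext z t) = z.
Proof. by apply: functional_extensionality => i; apply: ext_widen. Qed.

Lemma sq_proj n (x y : Rn n.+1) : sq x y = sq (proj x) (proj y) + (x ord_max - y ord_max) ^+ 2.
Proof. by rewrite /sq big_ord_recr. Qed.

Lemma proj_forth n (x x' : Rn n.+1) :
  R_lt1 (@euclid_dist n.+1) x x' -> R_lt1 (@euclid_dist n) (proj x) (proj x').
Proof.
move=> /relE h; apply/relE; apply: le_lt_trans h.
by rewrite /dist ler_sqrt ?sq_ge0 // [X in _ <= X]sq_proj lerDl sqr_ge0.
Qed.

Lemma proj_back n (x : Rn n.+1) (y : Rn n) :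
  R_lt1 (@euclid_dist n) (proj x) y -> exists x', R_lt1 (@euclid_dist n.+1) x x' /\ proj x' = y.
Proof.
move=> /relE h; exists (ext y (x ord_max)); split; last exact: proj_ext.
apply/relE; rewrite /dist sq_proj proj_ext ext_max subrr expr0n /= addr0; exact: h.
Qed.

Lemma part1 n phi : Log_lt1_Rn n.+1 phi -> Log_lt1_Rn n phi.
Proof.
move=> h V y.
have := @pmorph_sat _ _ (R_lt1 (@euclid_dist n.+1)) (R_lt1 (@euclid_dist n)) (@proj n)
  (@proj_forth n) (@proj_back n) V phi (ext y 0).
rewrite proj_ext => <-; apply: h.
Qed.
Section Obtuse.
Variable F : realFieldType.

Lemma widen_neq_max n (i : 'I_n.+1) : widen_ord (leqnSn _) i != (ord_max : 'I_n.+2).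
Proof. by apply/eqP => /(congr1 val) /= h; move: (ltn_ord i); rewrite h ltnn. Qed.

Lemma pos_comb_contra n (v : 'I_n.+2 -> 'I_n -> F) (e : 'I_n.+1 -> F) :
  (forall i j, i != j -> \sum_l v i l * v j l < 0) ->
  (forall i, 0 <= e i) -> (exists i, 0 < e i) ->
  (forall l, \sum_i e i * v (widen_ord (leqnSn _) i) l = 0) -> False.
Proof.
move=> hv he [i0 hi0] hz.
have h0 : \sum_l (\sum_i e i * v (widen_ord (leqnSn _) i) l) * v ord_max l = 0.
  by apply: big1 => l _; rewrite hz mul0r.
have e1 : \sum_l (\sum_i e i * v (widen_ord (leqnSn _) i) l) * v ord_max l
        = \sum_i e i * \sum_l v (widen_ord (leqnSn _) i) l * v ord_max l.
  rewrite (eq_bigr (fun l => \sum_i e i * v (widen_ord (leqnSn _) i) l * v ord_max l)); last first.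
    by move=> l _; rewrite mulr_suml.
  rewrite exchange_big /=; apply: eq_bigr => i _; rewrite mulr_sumr; apply: eq_bigr => l _.
  by rewrite mulrA.
rewrite e1 (bigD1 i0) //= in h0.
have h1 : e i0 * \sum_l v (widen_ord (leqnSn _) i0) l * v ord_max l < 0.
  by rewrite pmulr_rlt0 // hv // widen_neq_max.
have h2 : \sum_(i | i != i0) e i * \sum_l v (widen_ord (leqnSn _) i) l * v ord_max l <= 0.
  apply: sumr_le0 => i _; apply: mulr_ge0_le0 => //.
  by apply: ltW; apply: hv; rewrite widen_neq_max.
lra.
Qed.

Lemma obtuse n (v : 'I_n.+2 -> 'I_n -> F) :
  (forall i j, i != j -> \sum_l v i l * v j l < 0) -> False.
Proof.
move=> hv.
pose A : 'M[F]_(n.+1, n) := \matrix_(i, l) v (widen_ord (leqnSn _) i) l.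
have hk : kermx A != 0.
  by rewrite -mxrank_eq0 mxrank_ker subn_eq0 -ltnNge ltnS rank_leq_col.
have [i hi] : exists i, row i (kermx A) != 0.
  case: (pickP (fun i => row i (kermx A) != 0)) => [i hi | h]; first by exists i.
  exfalso; move/eqP: hk; apply; apply/row_matrixP => i.
  by move/negbFE: (h i) => /eqP ->; rewrite row0.
set c := row i (kermx A).
have hc : c *m A = 0 by rewrite -row_mul mulmx_ker row0.
have hcl : forall l, \sum_j c 0 j * v (widen_ord (leqnSn _) j) l = 0.
  move=> l; transitivity ((c *m A) 0 l); last by rewrite hc mxE.
  by rewrite mxE; apply: eq_bigr => j _; rewrite /A !mxE.
pose a j := if 0 <= c 0 j then c 0 j else 0.
pose b j := if 0 <= c 0 j then 0 else - c 0 j.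
have ha : forall j, 0 <= a j by move=> j; rewrite /a; case: ifP => // /negbT; lra.
have hb : forall j, 0 <= b j by move=> j; rewrite /b; case: ifP => // /negbT; lra.
have hab : forall j, c 0 j = a j - b j by move=> j; rewrite /a /b; case: ifP => _; lra.
have hW : forall l, \sum_j a j * v (widen_ord (leqnSn _) j) l = \sum_j b j * v (widen_ord (leqnSn _) j) l.
  move=> l; apply/eqP; rewrite -subr_eq0 -sumrB; apply/eqP; transitivity (\sum_j c 0 j * v (widen_ord (leqnSn _) j) l); last exact: hcl.
  by apply: eq_bigr => j _; rewrite hab mulrBl.
pose W l := \sum_j a j * v (widen_ord (leqnSn _) j) l.
have hS : \sum_l W l * W l <= 0.
  have -> : \sum_l W l * W l = \sum_j \sum_k \sum_l (a j * v (widen_ord (leqnSn _) j) l) * (b k * v (widen_ord (leqnSn _) k) l).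
    rewrite (eq_bigr (fun l => \sum_j \sum_k (a j * v (widen_ord (leqnSn _) j) l) * (b k * v (widen_ord (leqnSn _) k) l))); last first.
      by move=> l _; rewrite {2}/W hW big_distrlr.
    rewrite exchange_big /=; apply: eq_bigr => j _; by rewrite exchange_big.
  apply: sumr_le0 => j _; apply: sumr_le0 => k _.
  have -> : \sum_l (a j * v (widen_ord (leqnSn _) j) l) * (b k * v (widen_ord (leqnSn _) k) l)
           = (a j * b k) * \sum_l v (widen_ord (leqnSn _) j) l * v (widen_ord (leqnSn _) k) l.
    by rewrite mulr_sumr; apply: eq_bigr => l _; ring.
  case: (eqVneq j k) => [<- | hjk].
    by rewrite /a /b; case: ifP => _; rewrite ?mulr0 ?mul0r.
  apply: mulr_ge0_le0; first by apply: mulr_ge0.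
  apply: ltW; apply: hv; apply/eqP => /(congr1 val) /= /val_inj; exact/eqP.
have hW0 : forall l, W l = 0.
  move=> l; have hS0 : \sum_l W l * W l = 0.
    by apply/eqP; rewrite eq_le hS /=; apply: sumr_ge0 => l' _; rewrite -expr2 sqr_ge0.
  have := psumr_eq0P (fun l' _ => sqr_ge0 (W l')) _ (isT : predT l).
  rewrite (eq_bigr (fun l => W l * W l)); last by move=> l' _; rewrite expr2.
  by move=> /(_ hS0) /eqP; rewrite expr2 mulf_eq0 orbb => /eqP.
have [j0 hj0] : exists j, c 0 j != 0.
  case: (pickP (fun j => c 0 j != 0)) => [j hj | h]; first by exists j.
  exfalso; move/eqP: hi; apply; apply/rowP => j; rewrite [RHS]mxE.
  by apply/eqP; move/negbFE: (h j).
have [hs|hs] : c 0 j0 < 0 \/ 0 < c 0 j0 by apply/orP; rewrite -neq_lt.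
- have e1 : exists j, 0 < b j by exists j0; rewrite /b; case: ifP => h; lra.
  have e2 : forall l, \sum_j b j * v (widen_ord (leqnSn _) j) l = 0.
    by move=> l; rewrite -hW; apply: hW0.
  exact: (@pos_comb_contra n v b hv hb e1 e2).
- have e1 : exists j, 0 < a j by exists j0; rewrite /a; case: ifP => h; lra.
  have e2 : forall l, \sum_j a j * v (widen_ord (leqnSn _) j) l = 0.
    by move=> l; apply: hW0.
  exact: (@pos_comb_contra n v a hv ha e1 e2).
Qed.
End Obtuse.

Definition Phi (r : nat -> nat) (kk : nat -> nat -> nat) (M : nat) : mformula :=
  negF (andF (andN (fun i => dia (r i) (MVar i)) M)
             (andN (fun i => andN (fun j => if i == j then topF
                   else box (r i) (MImp (MVar i) (negF (dia (kk i j) (MVar j))))) M) M)).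

Lemma sat_neg (X : Type) (Rel : X -> X -> Prop) V x f :
  msat Rel V x (negF f) <-> ~ msat Rel V x f.
Proof. by []. Qed.

Lemma sq_sym n (x y : Rn n) : sq x y = sq y x.
Proof. by apply: eq_bigr => i _; rewrite -opprB sqrrN. Qed.

Lemma dist_lt_sq n (x y : Rn n) (c : R) : dist x y < c -> sq x y < c ^+ 2.
Proof.
move=> h; have h0 := sqrtr_ge0 (sq x y).
rewrite -(sqr_sqrtr (sq_ge0 x y)); rewrite /dist in h; nra.
Qed.

Lemma le_dist_sq n (x y : Rn n) (c : R) : 0 <= c -> c <= dist x y -> c ^+ 2 <= sq x y.
Proof.
move=> hc h; rewrite -(sqr_sqrtr (sq_ge0 x y)); rewrite /dist in h; nra.
Qed.

Lemma valid_Phi n r kk :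
  (forall i, (0 < r i)%N) -> (forall i j, (0 < kk i j)%N) ->
  (forall i j, (i < n.+2)%N -> (j < n.+2)%N -> i != j -> (r i ^ 2 + r j ^ 2 <= kk i j ^ 2)%N) ->
  Log_lt1_Rn n (Phi r kk n.+2).
Proof.
move=> hr hk hrk V x; apply/sat_neg => /sat_and [/sat_andN h1 /sat_andN h2].
have hy : forall i, exists y : Rn n,
    (i < n.+2)%N -> reach (R_lt1 (@euclid_dist n)) (r i) x y /\ V i y.
  move=> i; case: (ltnP i n.+2) => hi; last by exists x.
  by have /sat_dia [y [hy hv]] := h1 i hi; exists y.
pose y i := proj1_sig (constructive_indefinite_description _ (hy i)).
have hyP : forall i, (i < n.+2)%N -> reach (R_lt1 (@euclid_dist n)) (r i) x (y i) /\ V i (y i).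
  by move=> i; exact: (proj2_sig (constructive_indefinite_description _ (hy i))).
pose v : 'I_n.+2 -> 'I_n -> R := fun i l => y i l - x l.
apply: (@obtuse _ n v) => i j hij.
have hi := ltn_ord i; have hj := ltn_ord j.
have [ri Vi] := hyP i hi; have [rj Vj] := hyP j hj.
have di : dist x (y i) < (r i)%:R.
  by move: ri; case: (r i) (hr i) => [//|k] _ /reach_lt.
have dj : dist x (y j) < (r j)%:R.
  by move: rj; case: (r j) (hr j) => [//|k] _ /reach_lt.
have hij' : ((i : nat) == j) = false := negbTE hij.
have nr : ~ reach (R_lt1 (@euclid_dist n)) (kk i j) (y i) (y j).
  move=> hre; move: (h2 i hi) => /sat_andN /(_ j hj).
  rewrite hij' => /sat_box /(_ (y i) ri) /= /(_ Vi); apply.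
  by apply/sat_dia; exists (y j).
have dk : (kk i j)%:R <= dist (y i) (y j).
  rewrite leNgt; apply/negP => hlt; apply: nr; exact: lt_reach.
have e1 : sq x (y i) = \sum_l v i l ^+ 2.
  by apply: eq_bigr => l _; rewrite /v -opprB sqrrN.
have e2 : sq x (y j) = \sum_l v j l ^+ 2.
  by apply: eq_bigr => l _; rewrite /v -opprB sqrrN.
have e3 : sq (y i) (y j) = \sum_l v i l ^+ 2 + \sum_l v j l ^+ 2 - 2 * \sum_l v i l * v j l.
  rewrite mulr_sumr -big_split /= -sumrB; apply: eq_bigr => l _; rewrite /v; ring.
have hc : (r i)%:R ^+ 2 + (r j)%:R ^+ 2 <= (kk i j)%:R ^+ 2 :> R.
  by rewrite -!natrX -natrD ler_nat; apply: hrk.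
have q1 := dist_lt_sq di; have q2 := dist_lt_sq dj.
have q3 := le_dist_sq (ler0n _ _) dk.
lra.
Qed.

Definition Tm m := (6 * (m + 2))%N.
Definition A1 m := (Tm m * Tm m * (4 * m * m + 16 * m + 13))%N.
Definition A0 m := (Tm m * Tm m * (m + 2))%N.
Definition D1 m := (2 * Tm m * Tm m * (2 * m+5) * (2 * m+5))%N.
Definition D2 m := (Tm m * Tm m * (4 * m * m + 17 * m + 17))%N.
Definition rr m i := if (i < m.+2)%N then (Nat.sqrt (A1 m)).+1 else (Nat.sqrt (A0 m)).+1.
Definition kk m i j := if (i < m.+2)%N && (j < m.+2)%N then Nat.sqrt (D1 m) else Nat.sqrt (D2 m).

Lemma params' m :
  (2 * ((Nat.sqrt (A1 m)).+1 * (Nat.sqrt (A1 m)).+1) <= Nat.sqrt (D1 m) * Nat.sqrt (D1 m) /\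
  (Nat.sqrt (A1 m)).+1 * (Nat.sqrt (A1 m)).+1 + (Nat.sqrt (A0 m)).+1 * (Nat.sqrt (A0 m)).+1
     <= Nat.sqrt (D2 m) * Nat.sqrt (D2 m))%N.
Proof. exact: (params m). Qed.

Lemma sqrt_pos a : (0 < a)%N -> (0 < Nat.sqrt a)%N.
Proof. move=> h; have := sqrt_facts a; case: (Nat.sqrt a) => //=; lia. Qed.

Lemma rr_pos m i : (0 < rr m i)%N.
Proof. by rewrite /rr; case: ifP. Qed.

Lemma kk_pos m i j : (0 < kk m i j)%N.
Proof.
rewrite /kk; case: ifP => _; apply: sqrt_pos; rewrite /D1 /D2 /Tm; nia.
Qed.

Lemma rk_cond m i j : (i < m.+3)%N -> (j < m.+3)%N -> i != j ->
  (rr m i ^ 2 + rr m j ^ 2 <= kk m i j ^ 2)%N.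
Proof.
move=> hi hj hij; have [p1 p2] := params' m.
rewrite /rr /kk !expnS !expn0 !muln1.
case: (ltnP i m.+2) => hi'; case: (ltnP j m.+2) => hj' /=; lia.
Qed.

Lemma sum_ind1 N (i : nat) (d : R) : (i < N)%N -> \sum_(l < N) ((nat_of_ord l == i)%:R * d) = d.
Proof.
move=> hi; rewrite (bigD1 (Ordinal hi)) //= eqxx mul1r big1 ?addr0 // => l hl.
have -> : (nat_of_ord l == i) = false.
  by apply/negbTE; apply: contra hl => /eqP h; apply/eqP/val_inj.
by rewrite mul0r.
Qed.

Lemma sum_const N (c : R) : \sum_(l < N) c = N%:R * c.
Proof. by rewrite sumr_const card_ord mulr_natl. Qed.

Section Constr.
Variable m : nat.
Let N := m.+2.
Let T : R := (Tm m)%:R.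
Let a : R := (2 * m+5)%:R.

Definition ypt (i : nat) : Rn N := fun l =>
  if (i < N)%N then T * a * (nat_of_ord l == i)%:R - 2 * T else - T.

Definition x0 : Rn N := fun _ => 0.

Lemma sq_y1 i : (i < N)%N -> sq x0 (ypt i) = (A1 m)%:R.
Proof.
move=> hi.
have -> : sq x0 (ypt i) = \sum_(l < N) (4 * T ^+ 2 + (nat_of_ord l == i)%:R * (T^+2 * a^+2 - 4 * T^+2 * a)).
  apply: eq_bigr => l _; rewrite /x0 /ypt hi; case: (_ == _) => /=; ring.
rewrite big_split /= sum_const sum_ind1 // /A1 /T /a /N /Tm; ring.
Qed.

Lemma sq_y0 : sq x0 (ypt N) = (A0 m)%:R.
Proof.
have -> : sq x0 (ypt N) = \sum_(l < N) T ^+ 2.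
  by apply: eq_bigr => l _; rewrite /x0 /ypt ltnn; ring.
rewrite sum_const /A0 /T /N /Tm; ring.
Qed.

Lemma sq_y11 i j : (i < N)%N -> (j < N)%N -> i != j -> sq (ypt i) (ypt j) = (D1 m)%:R.
Proof.
move=> hi hj hij.
have -> : sq (ypt i) (ypt j) = \sum_(l < N) (0 + (nat_of_ord l == i)%:R * (T^+2 * a^+2) + (nat_of_ord l == j)%:R * (T^+2 * a^+2)).
  apply: eq_bigr => l _; rewrite /ypt hi hj.
  case: (eqVneq (nat_of_ord l) i) => [hli|hli].
    have -> : (nat_of_ord l == j) = false by rewrite -hli eq_sym in hij; apply/negbTE; rewrite eq_sym.
    rewrite /=; ring.
  case: (_ == j) => /=; ring.
rewrite !big_split /= sum_const !sum_ind1 // /D1 /T /a /Tm; ring.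
Qed.

Lemma sq_y10 i : (i < N)%N -> sq (ypt i) (ypt N) = (D2 m)%:R.
Proof.
move=> hi.
have -> : sq (ypt i) (ypt N) = \sum_(l < N) (T ^+ 2 + (nat_of_ord l == i)%:R * (T^+2 * a^+2 - 2 * T^+2 * a)).
  apply: eq_bigr => l _; rewrite /ypt hi ltnn; case: (_ == _) => /=; ring.
rewrite big_split /= sum_const sum_ind1 // /D2 /T /a /N /Tm; ring.
Qed.
End Constr.

Lemma sq_lt_dist n (x y : Rn n) (c : R) : 0 <= c -> sq x y < c ^+ 2 -> dist x y < c.
Proof.
move=> hc h; rewrite /dist -(ger0_norm hc) -sqrtr_sqr ltr_sqrt //.
exact: le_lt_trans (sq_ge0 x y) h.
Qed.

Lemma le_dist n (x y : Rn n) (c : R) : 0 <= c -> c ^+ 2 <= sq x y -> c <= dist x y.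
Proof.
by move=> hc h; rewrite /dist -(ger0_norm hc) -sqrtr_sqr ler_sqrt // sq_ge0.
Qed.

Lemma notvalid m : ~ Log_lt1_Rn m.+2 (Phi (rr m) (kk m) m.+3).
Proof.
move=> hv.
pose V := fun (p : nat) (z : Rn m.+2) => z = @ypt m p.
move: (hv V (@x0 m)); rewrite /Phi => /sat_neg; apply.
apply/sat_and; split.
- apply/sat_andN => i hi; apply/sat_dia; exists (@ypt m i); split => //.
  apply: lt_reach; first exact: rr_pos.
  apply: sq_lt_dist => //.
  rewrite /rr; case: ifP => hi'.
    rewrite sq_y1 // -natrX ltr_nat; have := sqrt_facts (A1 m); rewrite expnS expn1; lia.
  have -> : i = m.+2 by move/negbT: hi'; lia.
  rewrite sq_y0 -natrX ltr_nat; have := sqrt_facts (A0 m); rewrite expnS expn1; lia.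
- apply/sat_andN => i hi; apply/sat_andN => j hj.
  case: eqP => [_ | hij]; first by [].
  apply/sat_box => z _ /= hz; rewrite /V in hz; subst z.
  move=> /sat_dia [w [hw hwj]]; rewrite /V /= in hwj; subst w.
  have dk : (kk m i j)%:R <= dist (@ypt m i) (@ypt m j).
    apply: le_dist => //; rewrite -natrX /kk.
    case: (ltnP i m.+2) => hi'; case: (ltnP j m.+2) => hj' /=.
    + rewrite sq_y11 //; last by apply/eqP.
      by rewrite ler_nat; have := sqrt_facts (D1 m); rewrite expnS expn1; lia.
    + have -> : j = m.+2 by lia.
      rewrite sq_y10 // ler_nat; have := sqrt_facts (D2 m); rewrite expnS expn1; lia.
    + have -> : i = m.+2 by lia.
      rewrite sq_sym sq_y10 // ler_nat; have := sqrt_facts (D2 m); rewrite expnS expn1; lia.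
    + by exfalso; apply: hij; lia.
  move: hw dk; case: (kk m i j) (kk_pos m i j) => [//|k] _ /reach_lt h1 h2.
  by move: (lt_le_trans h1 h2); rewrite ltxx.
Qed.

Theorem proposition3p7 (n : nat) (hn : (1 <= n)%N) :
  (forall phi : mformula, Log_lt1_Rn n.+1 phi -> Log_lt1_Rn n phi) /\
  (exists phi : mformula, Log_lt1_Rn n phi /\ ~ Log_lt1_Rn n.+1 phi).
Proof.
split; first exact: part1.
case: n hn => [//|m] _.
exists (Phi (rr m) (kk m) m.+3); split.
- apply: valid_Phi; [exact: rr_pos | exact: kk_pos | exact: rk_cond].
- exact: notvalid.
Qed.
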